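(* Let $(\mathcal V,\otimes,\lambda)$ be a colax Monoidal category and let $(C,\chi)$ be a homotopy coalgebra in $\mathcal V$. Then $(C,\chi)$ is the homotopy coalgebra associated with an ordinary (coassociative counital) coalgebra if and only if $C(I)=C(1)^{\otimes I}$ for all $I\in\mathbb N$ and $\chi^I_{n_1,\dots,n_I}=\lambda^{\sqcup_{i\in I}\mathbf n_i\to I}$ for all $I,n_1,\dots,n_I\in\mathbb N$, where $\sqcup_{i\in I}\mathbf n_i\to I$ is the non-decreasing map sending the $i$-th block $\mathbf n_i$ to $i$.
   Context: $\mathcal O_{sk}$ is the category with objects $\mathbf n=\{1<\dots<n\}$, $n\ge0$ (identified with $n\in\mathbb N$) and non-decreasing maps as morphisms; $\sqcup$ is ordered disjoint union. Composition is written in diagrammatic order. A colax Monoidal category $(\mathcal V,\otimes,\lambda)$ has tensor products $\otimes^{i\in I}X_i$ of finite ordered families and coherent structure morphisms $\lambda^\phi:\otimes^{j\in J}\otimes^{i\in\phi^{-1}j}X_i\to\otimes^{i\in I}X_i$ for $\phi:I\to J$ in $\mathcal O_{sk}$ (the opposite of a lax Monoidal structure on $\mathcal V^{op}$). A homotopy coalgebra $(C,\chi)$ is a lax Monoidal functor $(\mathcal O_{sk}^{op},\sqcup,\mathrm{id})\to(\mathcal V,\otimes,\lambda)$: objects $C(k)$, a functor $C:\mathcal O_{sk}^{op}\to\mathcal V$ (write $C(\phi^{op})$ for $\phi:I\to J$), morphisms $\chi^I_{N_1,\dots,N_I}:\otimes^{i\in I}C(N_i)\to C(\sqcup_iN_i)$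 natural in the $N_i$, with $\chi^{\mathbf1}_N=\mathrm{id}$ and, for every $\phi:I\to J$ and family $(N_i)_{i\in I}$, $(\otimes^{j\in J}\chi^{\phi^{-1}j})\chi^J=\lambda^\phi\chi^I$. An ordinary coalgebra is an object $C$ with $\Delta_I:C\to C^{\otimes I}$, $I\in\mathbb N$, $\Delta_{\mathbf1}=\mathrm{id}$, $\Delta_I=\Delta_J(\otimes^{j\in J}\Delta_{\phi^{-1}j})\lambda^\phi$ for all $\phi:I\to J$. Its associated homotopy coalgebra has $C(J)=C^{\otimes J}$, $C(\phi^{op})=(\otimes^{j\in J}\Delta_{\phi^{-1}j})\lambda^\phi$ and $\chi^I_{n_1,\dots,n_I}=\lambda^{\psi}$ where $\psi:\sqcup_{i\in I}\mathbf n_i\to I$ sends the $i$-th block to $i$. *)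

(* Defs.v *)
From HB Require Import structures.
From mathcomp Require Import all_boot all_order.
Set Implicit Arguments. Unset Strict Implicit. Unset Printing Implicit Defensive.
Import Order.TTheory.

Record omor (m n : nat) := OMap {
  omfun :> 'I_m -> 'I_n;
  omono : forall x y : 'I_m, (x <= y)%N -> (omfun x <= omfun y)%N }.

Lemma omor_id_mono m : forall x y : 'I_m, (x <= y)%N -> ((id x : 'I_m) <= id y)%N.
Proof. by []. Qed.
Definition omor_id m : omor m m := OMap (@omor_id_mono m).

Lemma omor_comp_mono m n p (f : omor m n) (g : omor n p) :
  forall x y : 'I_m, (x <= y)%N -> ((f \; g) x <= (f \; g) y)%N.
Proof. by move=> x y le; apply: omono; apply: omono. Qed.
Definition omor_comp m n p (f : omor m n) (g : omor n p) : omor m p :=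
  OMap (omor_comp_mono f g).

Lemma omor_to1_mono m : forall x y : 'I_m, (x <= y)%N ->
  (((fun _ => ord0) : 'I_m -> 'I_1) x <= ((fun _ => ord0) : 'I_m -> 'I_1) y)%N.
Proof. by []. Qed.
Definition omor_to1 m : omor m 1 := OMap (@omor_to1_mono m).

(* The preimage f^{-1} j as an ordered set, identified with 'I_#|fib f j|
   via the increasing enumeration fibval. *)
Definition fib m n (f : 'I_m -> 'I_n) (j : 'I_n) : {set 'I_m} := [set i | f i == j].
Definition fibval m n (f : 'I_m -> 'I_n) (j : 'I_n) (t : 'I_#|fib f j|) : 'I_m :=
  Order.enum_val t.

Lemma fibval_mono m n (f : 'I_m -> 'I_n) (j : 'I_n) (s t : 'I_#|fib f j|) :
  (s <= t)%N -> (fibval s <= fibval t)%N.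
Proof.
move=> le.
have := @Order.le_enum_val _ _ (@le_total _ 'I_m) (mem (fib f j)) s t.
by rewrite /fibval !leEord /= => ->.
Qed.

Lemma res_in m n p (f : omor m n) (g : omor n p) (k : 'I_p)
  (t : 'I_#|fib (omor_comp f g) k|) : f (fibval t) \in fib g k.
Proof.
have := Order.enum_valP t; rewrite !inE => H; exact: H.
Qed.

Definition res_fun m n p (f : omor m n) (g : omor n p) (k : 'I_p)
  (t : 'I_#|fib (omor_comp f g) k|) : 'I_#|fib g k| :=
  Order.enum_rank_in (res_in t) (f (fibval t)).


Lemma res_mono m n p (f : omor m n) (g : omor n p) (k : 'I_p) :
  forall x y : 'I_#|fib (omor_comp f g) k|, (x <= y)%N ->
    (res_fun x <= res_fun y)%N.
Proof.
move=> x y le.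
have := @Order.le_enum_val _ _ (@le_total _ 'I_n) (mem (fib g k)) (res_fun x) (res_fun y).
rewrite /res_fun !Order.enum_rankK_in ?res_in // !leEord /= => <-.
by apply: omono; apply: fibval_mono.
Qed.

Definition res m n p (f : omor m n) (g : omor n p) (k : 'I_p) :
  omor #|fib (omor_comp f g) k| #|fib g k| := OMap (@res_mono m n p f g k).

(* The object \sqcup_{i in I} N_i of O_sk is \sum_i N i; blk N i t is the
   t-th element of the i-th block. *)
Definition bsum I (N : 'I_I -> nat) : nat := \sum_(i < I) N i.

Lemma blk_subproof I (N : 'I_I -> nat) (i : 'I_I) (t : 'I_(N i)) :
  (\sum_(j < I | (j < i)%N) N j + t < bsum N)%N.
Proof.
rewrite /bsum [X in (_ < X)%N](bigID (fun j : 'I_I => (j < i)%N)) /= ltn_add2l.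
rewrite (bigD1 i) ?ltnn //= ltn_addr //.
Qed.

Definition blk I (N : 'I_I -> nat) (i : 'I_I) (t : 'I_(N i)) : 'I_(bsum N) :=
  Ordinal (blk_subproof t).

(* Composition is written in diagrammatic order. *)
Record colaxMonoidalCat := ColaxMonoidalCat {
  Ob : Type;
  Hom : Ob -> Ob -> Type;
  idm : forall a, Hom a a;
  comp : forall a b c, Hom a b -> Hom b c -> Hom a c;
  compA : forall a b c d (f : Hom a b) (g : Hom b c) (h : Hom c d),
    comp f (comp g h) = comp (comp f g) h;
  comp1m : forall a b (f : Hom a b), comp (idm a) f = f;
  compm1 : forall a b (f : Hom a b), comp f (idm b) = f;
  tens : forall n, ('I_n -> Ob) -> Ob;
  tensM : forall n (X Y : 'I_n -> Ob), (forall i, Hom (X i) (Y i)) ->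
    Hom (tens X) (tens Y);
  tensM_id : forall n (X : 'I_n -> Ob), tensM (fun i => idm (X i)) = idm (tens X);
  tensM_comp : forall n (X Y Z : 'I_n -> Ob)
    (f : forall i, Hom (X i) (Y i)) (g : forall i, Hom (Y i) (Z i)),
    tensM (fun i => comp (f i) (g i)) = comp (tensM f) (tensM g);
  tens1 : forall X : 'I_1 -> Ob, tens X = X ord0;
  tensM1 : forall (X Y : 'I_1 -> Ob) (f : forall i, Hom (X i) (Y i)),
    existT (fun p : Ob * Ob => Hom p.1 p.2) (tens X, tens Y) (tensM f) =
    existT (fun p : Ob * Ob => Hom p.1 p.2) (X ord0, Y ord0) (f ord0);
  lam : forall m n (phi : omor m n) (X : 'I_m -> Ob),
    Hom (tens (fun j : 'I_n => tens (fun t : 'I_#|fib phi j| => X (fibval t))))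
        (tens X);
  lam_nat : forall m n (phi : omor m n) (X Y : 'I_m -> Ob)
    (f : forall i, Hom (X i) (Y i)),
    comp (tensM (fun j : 'I_n => tensM (fun t : 'I_#|fib phi j| => f (fibval t))))
         (lam phi Y)
    = comp (lam phi X) (tensM f);
  lam_id : forall m (X : 'I_m -> Ob),
    existT (fun p : Ob * Ob => Hom p.1 p.2) (_, _) (lam (omor_id m) X) =
    existT (fun p : Ob * Ob => Hom p.1 p.2) (_, _) (idm (tens X));
  lam_to1 : forall m (X : 'I_m -> Ob),
    existT (fun p : Ob * Ob => Hom p.1 p.2) (_, _) (lam (omor_to1 m) X) =
    existT (fun p : Ob * Ob => Hom p.1 p.2) (_, _) (idm (tens X));
  lam_assoc : forall m n p (f : omor m n) (g : omor n p) (X : 'I_m -> Ob),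
    existT (fun p : Ob * Ob => Hom p.1 p.2) (_, _)
      (comp (tensM (fun k : 'I_p =>
               lam (res f g k)
                   (fun t : 'I_#|fib (omor_comp f g) k| => X (fibval t))))
            (lam (omor_comp f g) X)) =
    existT (fun p : Ob * Ob => Hom p.1 p.2) (_, _)
      (comp (lam g (fun j : 'I_n => tens (fun t : 'I_#|fib f j| => X (fibval t))))
            (lam f X))
}.

Arguments idm {V} a : rename.
Arguments comp {V a b c} f g : rename.
Arguments tens {V n} X : rename.
Arguments tensM {V n X Y} f : rename.
Arguments lam {V m n} phi X : rename.

(* A morphism together with its source and target; equality of such
   packages is equality of morphisms after identifying (equal) objects. *)
Definition arr (V : colaxMonoidalCat) (a b : Ob V) (f : Hom a b) :
  {p : Ob V * Ob V & Hom p.1 p.2} := existT (fun p : Ob V * Ob V => Hom p.1 p.2) (a, b) f.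

(* A lax Monoidal functor (O_sk^op, \sqcup, id) -> (V, tens, lam). *)
Record hcoalg (V : colaxMonoidalCat) := HCoalg {
  hC : nat -> Ob V;
  hCM : forall m n, omor m n -> Hom (hC n) (hC m);
  hCM_id : forall m, hCM (omor_id m) = idm (hC m);
  hCM_comp : forall m n p (f : omor m n) (g : omor n p),
    hCM (omor_comp f g) = comp (hCM g) (hCM f);
  chi : forall I (N : 'I_I -> nat),
    Hom (tens (fun i : 'I_I => hC (N i))) (hC (bsum N));
  (* chi is natural in the N_i; \sqcup_i phi_i is characterised blockwise *)
  chi_nat : forall I (M N : 'I_I -> nat) (phi : forall i, omor (M i) (N i))
    (Phi : omor (bsum M) (bsum N)),
    (forall i (t : 'I_(M i)), Phi (blk t) = blk (phi i t)) ->
    comp (tensM (fun i => hCM (phi i))) (chi M) = comp (chi N) (hCM Phi);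
  chi_one : forall N : 'I_1 -> nat, arr (chi N) = arr (idm (hC (N ord0)));
  chi_assoc : forall I J (phi : omor I J) (N : 'I_I -> nat),
    arr (comp (tensM (fun j : 'I_J =>
                 chi (fun t : 'I_#|fib phi j| => N (fibval t))))
              (chi (fun j : 'I_J => bsum (fun t : 'I_#|fib phi j| => N (fibval t)))))
    = arr (comp (lam phi (fun i => hC (N i))) (chi N))
}.

Record coalg (V : colaxMonoidalCat) := Coalg {
  cA : Ob V;
  cD : forall I, Hom cA (tens (fun _ : 'I_I => cA));
  cD_one : arr (cD 1) = arr (idm cA);
  cD_coassoc : forall I J (phi : omor I J),
    cD I = comp (comp (cD J) (tensM (fun j : 'I_J => cD #|fib phi j|)))
                (lam phi (fun _ : 'I_I => cA))
}.

Definition is_block_map I (N : 'I_I -> nat) (psi : omor (bsum N) I) : Prop :=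
  forall i (t : 'I_(N i)), psi (blk t) = i.

Definition associated_with (V : colaxMonoidalCat) (D : coalg V) (H : hcoalg V) : Prop :=
  [/\ forall J, hC H J = tens (fun _ : 'I_J => cA D),
      forall m n (phi : omor m n),
        arr (hCM H phi) =
        arr (comp (tensM (fun j : 'I_n => cD D #|fib phi j|))
                  (lam phi (fun _ : 'I_m => cA D)))
    & forall I (N : 'I_I -> nat) (psi : omor (bsum N) I), is_block_map psi ->
        arr (chi H N) = arr (lam psi (fun _ => cA D))].

(* Main.v *)
Require Import Defs.
From mathcomp Require Import all_boot all_order.
From Stdlib Require Import Eqdep FunctionalExtensionality ProofIrrelevance.
From mathcomp Require Import zify.
Set Implicit Arguments. Unset Strict Implicit.

Section Gen.
Variable V : colaxMonoidalCat.

Lemma arr_inj (a b : Ob V) (f g : Hom a b) : arr f = arr g -> f = g.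
Proof. exact: Eqdep.EqdepTheory.inj_pairT2. Qed.

Lemma arr_comp (a b c a' b' c' : Ob V) (f : Hom a b) (g : Hom b c)
  (f' : Hom a' b') (g' : Hom b' c') :
  arr f = arr f' -> arr g = arr g' -> arr (Defs.comp f g) = arr (Defs.comp f' g').
Proof.
move=> E1 E2.
have := f_equal (@projT1 _ _) E1 => /= [[ea eb]].
have := f_equal (@projT1 _ _) E2 => /= [[_ ec]].
subst a' b' c'.
by rewrite (arr_inj E1) (arr_inj E2).
Qed.

Lemma arr_comp_idl (a b c x : Ob V) (f : Hom a b) (g : Hom b c) :
  arr f = arr (idm x) -> arr (Defs.comp f g) = arr g.
Proof.
move=> E1.
have := f_equal (@projT1 _ _) E1 => /= [[ea eb]].
subst x b. by rewrite (arr_inj E1) comp1m.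
Qed.

Lemma arr_tensM n (X Y X' Y' : 'I_n -> Ob V) (f : forall i, Hom (X i) (Y i))
  (f' : forall i, Hom (X' i) (Y' i)) :
  (forall i, arr (f i) = arr (f' i)) -> arr (tensM f) = arr (tensM f').
Proof.
move=> E.
have eX : X = X'.
  by apply: functional_extensionality => i; have := f_equal (fun p => (projT1 p).1) (E i).
have eY : Y = Y'.
  by apply: functional_extensionality => i; have := f_equal (fun p => (projT1 p).2) (E i).
subst X' Y'.
have -> : f = f' by apply: functional_extensionality_dep => i; apply: arr_inj.
by [].
Qed.

Lemma arr_cast (a b b' : Ob V) (e : b = b') (f : Hom a b) :
  arr (eq_rect b (Hom a) f b' e) = arr f.
Proof. by case: b' / e. Qed.

End Gen.

Lemma omor_ext m n (f g : omor m n) : (forall x, f x = g x) -> f = g.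
Proof.
case: f => f fm; case: g => g gm /= E.
have ? := functional_extensionality _ _ E; subst g.
by rewrite (proof_irrelevance _ fm gm).
Qed.

Lemma hCM_cast V (H : hcoalg V) m n m' n' (em : m = m') (en : n = n')
  (psi : omor m n) (phi : omor m' n') :
  (forall x, val (psi x) = val (phi (cast_ord em x))) ->
  arr (hCM H psi) = arr (hCM H phi).
Proof.
subst m' n' => E.
suff -> : psi = phi by [].
apply: omor_ext => x; apply: val_inj; rewrite E; congr (val (phi _)); exact: val_inj.
Qed.

Lemma lam_cast V m m' n (em : m = m') (psi : omor m n) (phi : omor m' n) (A : Ob V) :
  (forall x, val (psi x) = val (phi (cast_ord em x))) ->
  arr (lam psi (fun _ => A)) = arr (lam phi (fun _ => A)).
Proof.
subst m' => E.
suff -> : psi = phi by [].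
apply: omor_ext => x; apply: val_inj; rewrite E; congr (val (phi _)); exact: val_inj.
Qed.

Section Comb.
Variables (m n : nat) (phi : omor m n).

Definition S j := #|[set y : 'I_m | (phi y < j)%N]|.

Lemma card_lt (x : nat) : (x <= m)%N -> #|[set y : 'I_m | (y < x)%N]| = x.
Proof.
move=> le.
have E := @big_ord_widen_cond nat 0 addn x m xpredT (fun _ => 1) le.
rewrite /= sum1_card card_ord in E.
by rewrite [RHS]E -sum1_card; apply: eq_bigl => y; rewrite inE.
Qed.

Lemma S_mono j1 j2 : (j1 <= j2)%N -> (S j1 <= S j2)%N.
Proof.
move=> le; apply: subset_leq_card; apply/subsetP => y; rewrite !inE => h.
exact: leq_trans h le.
Qed.

Lemma S_le (x : 'I_m) : (S (phi x) <= x)%N.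
Proof.
rewrite -[X in (_ <= X)%N](@card_lt x); last exact: ltnW.
apply: subset_leq_card; apply/subsetP => y; rewrite !inE => h.
rewrite ltnNge; apply/negP => le.
have := omono phi le; rewrite leqNgt h //.
Qed.

Lemma S_gt (x : 'I_m) : (x < S (phi x).+1)%N.
Proof.
rewrite -[X in (X <= _)%N](@card_lt x.+1); last exact: ltn_ord.
apply: subset_leq_card; apply/subsetP => y; rewrite !inE ltnS => h.
exact: omono.
Qed.

Lemma S_succ (j : 'I_n) : S j.+1 = S j + #|fib phi j|.
Proof.
rewrite /S -(cardID [set y : 'I_m | (phi y < j)%N] [set y : 'I_m | (phi y < j.+1)%N]).
congr (_ + _); apply: eq_card => y; rewrite !inE.
  apply/andP/idP => [[] //|h]. split=> //. exact: ltnW.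
rewrite -val_eqE /=; apply/idP/idP => h; lia.
Qed.

Lemma sumS (j : nat) : \sum_(k < n | (k < j)%N) #|fib phi k| = S j.
Proof.
rewrite /S -sum1_card.
rewrite (partition_big phi (fun k : 'I_n => (k < j)%N)) //=.
apply: eq_bigr => k kj; rewrite sum1_card; apply: eq_card => y.
rewrite !inE /in_mem /=.
change ((phi y == k) = (y \in [set y0 | (phi y0 < j)%N]) && (phi y == k)); rewrite inE.
case E: (phi y == k); rewrite ?andbT ?andbF //.
by rewrite (eqP E) kj.
by move=> i; rewrite inE.
Qed.

Lemma bsum_fib : bsum (fun k : 'I_n => #|fib phi k|) = m.
Proof.
have -> : bsum (fun k : 'I_n => #|fib phi k|) = S n.
  by rewrite -sumS /bsum; apply: eq_bigl => k; rewrite ltn_ord.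
rewrite /S -[RHS](card_ord m); apply: eq_card => y; by rewrite !inE ltn_ord.
Qed.

Lemma blk_val (j : 'I_n) (t : nat) (y : 'I_m) :
  (t < #|fib phi j|)%N -> val y = S j + t -> phi y = j.
Proof.
move=> tlt yE; apply: val_inj => /=.
have h1 := S_le y; have h2 := S_gt y.
have h3 := S_succ j.
case: (ltngtP (phi y) j) => // c.
- have := S_mono c; move=> hh; simpl in *; lia.
- have := S_mono c; move=> hh; simpl in *; lia.
Qed.
End Comb.

Lemma sum_lt1 n (j : nat) : (j <= n)%N -> \sum_(k < n | (k < j)%N) 1 = j.
Proof.
move=> le; rewrite sum1_card -[RHS](@card_lt n j le).
by apply: eq_card => y; rewrite !inE.
Qed.

Lemma bsum1 n : bsum (fun _ : 'I_n => 1) = n.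
Proof. by rewrite /bsum sum1_card card_ord. Qed.

Section Main.
Variables (V : colaxMonoidalCat) (H : hcoalg V).
Hypothesis h1 : forall I : nat, hC H I = tens (fun _ : 'I_I => hC H 1).
Hypothesis h2 : forall (I : nat) (N : 'I_I -> nat) (psi : omor (bsum N) I),
      is_block_map psi ->
      arr (chi H N) = arr (lam psi (fun _ => hC H 1)).

Definition cDel I : Hom (hC H 1) (tens (fun _ : 'I_I => hC H 1)) :=
  eq_rect (hC H I) (Hom (hC H 1)) (hCM H (omor_to1 I)) _ (h1 I).

Lemma arr_cDel I : arr (cDel I) = arr (hCM H (omor_to1 I)).
Proof. exact: arr_cast. Qed.

Section Key.
Variables (m n : nat) (phi : omor m n).
Let M := fun k : 'I_n => #|fib phi k|.
Let e1 : bsum M = m := bsum_fib phi.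
Let eN : bsum (fun _ : 'I_n => 1) = n := bsum1 n.

Lemma psiM_mono : forall x y : 'I_(bsum M), (x <= y)%N ->
  (phi (cast_ord e1 x) <= phi (cast_ord e1 y))%N.
Proof. by move=> x y le; apply: omono. Qed.
Definition psiM : omor (bsum M) n := OMap psiM_mono.

Lemma psiN_mono : forall x y : 'I_(bsum (fun _ : 'I_n => 1)), (x <= y)%N ->
  (cast_ord eN x <= cast_ord eN y)%N.
Proof. by []. Qed.
Definition psiN : omor _ n := OMap psiN_mono.

Lemma Phi_mono : forall x y : 'I_(bsum M), (x <= y)%N ->
  (cast_ord (esym eN) (phi (cast_ord e1 x)) <= cast_ord (esym eN) (phi (cast_ord e1 y)))%N.
Proof. by move=> x y le; apply: omono. Qed.
Definition Phi : omor (bsum M) (bsum (fun _ : 'I_n => 1)) := OMap Phi_mono.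

Lemma phi_blk (j : 'I_n) (t : 'I_(M j)) : phi (cast_ord e1 (blk t)) = j.
Proof.
apply: (blk_val (t := t)); first exact: ltn_ord.
by rewrite /= -sumS.
Qed.

Lemma psiM_block : is_block_map psiM.
Proof. move=> j t; exact: phi_blk. Qed.

Lemma psiN_block : is_block_map psiN.
Proof.
move=> j t; apply: val_inj => /=.
rewrite sum_lt1; last exact: ltnW.
by rewrite (ord1 t) addn0.
Qed.

Lemma Phi_block (j : 'I_n) (t : 'I_(M j)) :
  Phi (@blk n M j t) = @blk n (fun _ => 1) j (omor_to1 (M j) t).
Proof.
apply: val_inj => /=.
rewrite phi_blk sum_lt1 ?addn0 //; exact: ltnW.
Qed.

Lemma key :
  arr (hCM H phi) =
  arr (Defs.comp (tensM (fun j : 'I_n => cDel #|fib phi j|)) (lam phi (fun _ : 'I_m => hC H 1))).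
Proof.
have E := @chi_nat V H n M (fun _ => 1) (fun j => omor_to1 (M j)) Phi Phi_block.
have -> : arr (hCM H phi) = arr (hCM H Phi).
  symmetry; apply: (@hCM_cast V H _ _ _ _ e1 eN Phi phi) => x //.
have -> : arr (hCM H Phi) = arr (Defs.comp (chi H (fun _ : 'I_n => 1)) (hCM H Phi)).
  symmetry; apply: (arr_comp_idl (x := tens (fun _ : 'I_n => hC H 1))).
  rewrite (h2 psiN_block).
  rewrite (@lam_cast V _ _ n eN psiN (omor_id n) (hC H 1)) //.
  exact: lam_id.
rewrite -E.
apply: arr_comp.
  apply: arr_tensM => j; by rewrite arr_cDel.
rewrite (h2 psiM_block).
by apply: (@lam_cast V _ _ n e1 psiM phi (hC H 1)).
Qed.
End Key.

Lemma cDel_one : arr (cDel 1) = arr (idm (hC H 1)).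
Proof.
rewrite arr_cDel.
have -> : omor_to1 1 = omor_id 1 by apply: omor_ext => x; apply: val_inj; case: x => [[]].
by rewrite hCM_id.
Qed.

Lemma cDel_coassoc I J (phi : omor I J) :
  cDel I = Defs.comp (Defs.comp (cDel J) (tensM (fun j : 'I_J => cDel #|fib phi j|)))
                (lam phi (fun _ : 'I_I => hC H 1)).
Proof.
apply: arr_inj; rewrite -Defs.compA arr_cDel.
have -> : omor_to1 I = omor_comp phi (omor_to1 J) by apply: omor_ext.
rewrite hCM_comp; apply: arr_comp; first by rewrite arr_cDel.
exact: key.
Qed.

Definition theD : coalg V := Coalg cDel_one cDel_coassoc.

Lemma theD_assoc : associated_with theD H.
Proof.
split.
- exact: h1.
- move=> m n phi; exact: key.
- exact: h2.
Qed.
End Main.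

Theorem mainTheorem2 (V : colaxMonoidalCat) (H : hcoalg V) :
  (exists D : coalg V, associated_with D H) <->
  ((forall I : nat, hC H I = tens (fun _ : 'I_I => hC H 1)) /\
   (forall (I : nat) (N : 'I_I -> nat) (psi : omor (bsum N) I),
      is_block_map psi ->
      arr (chi H N) = arr (lam psi (fun _ => hC H 1)))).
Proof.
split.
- case=> D [hA hM hchi].
  have e : hC H 1 = cA D by rewrite hA tens1.
  split.
  + by move=> I; rewrite e; apply: hA.
  + move=> I N psi bp.
    by move: (hchi I N psi bp); rewrite -e.
- case=> h1 h2; exists (theD h1 h2); exact: theD_assoc.
Qed.
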